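(* Let $\beta>0$, $\bar\mu\in\mathbb{R}^{N\times p}$, $g\in C^3(\mathbb{R})$, and $m=g\circ G_\beta:\mathbb{R}^{N\times p}\to\mathbb{R}$. Then for every $X\in\mathbb{R}^{N\times p}$, $$\sum_{k\in[N],j\in[p]}\Big|\frac{\partial m(X)}{\partial X_{kj}}\Big|\le\|g'\|_\infty,$$ $$\sum_{k_1,k_2\in[N],\,j_1,j_2\in[p]}\Big|\frac{\partial^2m(X)}{\partial X_{k_1j_1}\partial X_{k_2j_2}}\Big|\le\|g''\|_\infty+4\beta\|g'\|_\infty,$$ $$\sum_{k_1,k_2,k_3\in[N],\,j_1,j_2,j_3\in[p]}\Big|\frac{\partial^3m(X)}{\partial X_{k_1j_1}\partial X_{k_2j_2}\partial X_{k_3j_3}}\Big|\le\|g'''\|_\infty+16\beta\|g''\|_\infty+24\beta^2\|g'\|_\infty.$$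
   Context: For $k\in[N]$ and $v\in\mathbb{R}^p$, $F_{\beta,\bar\mu_k}(v)=\beta^{-1}\log\big(\sum_{j=1}^p\exp(\beta\{v_j+\bar\mu_{kj}\})\big)$; for $X\in\mathbb{R}^{N\times p}$ with rows $X_{1\cdot},\dots,X_{N\cdot}$, $F_{\beta,\bar\mu}(X)=(F_{\beta,\bar\mu_1}(X_{1\cdot}),\dots,F_{\beta,\bar\mu_N}(X_{N\cdot}))'\in\mathbb{R}^N$; for $u\in\mathbb{R}^N$, $F_{\beta,0}(u)=\beta^{-1}\log\sum_{k=1}^N\exp(\beta u_k)$; and $G_\beta(X)=-F_{\beta,0}(-F_{\beta,\bar\mu}(X))$. $\|g^{(r)}\|_\infty=\sup_{t\in\mathbb{R}}|g^{(r)}(t)|$. *)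

(* Defs.v *)
From HB Require Import structures.
From mathcomp Require Import all_boot all_order all_algebra.
From mathcomp Require Import all_classical all_reals all_analysis.
Set Implicit Arguments. Unset Strict Implicit. Unset Printing Implicit Defensive.
Import Order.TTheory GRing.Theory Num.Theory.
Import numFieldNormedType.Exports.
Local Open Scope ring_scope.

Section Defs.
Variable R : realType.

Definition Fk (beta : R) (N p : nat) (mu : 'M[R]_(N, p)) (k : 'I_N) (v : 'rV[R]_p) : R :=
  beta^-1 * ln (\sum_(j < p) expR (beta * (v 0 j + mu k j))).

Definition Fmu (beta : R) (N p : nat) (mu : 'M[R]_(N, p)) (X : 'M[R]_(N, p)) : 'rV[R]_N :=
  \row_(k < N) Fk beta mu k (row k X).

Definition F0 (beta : R) (N : nat) (u : 'rV[R]_N) : R :=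
  beta^-1 * ln (\sum_(k < N) expR (beta * u 0 k)).

Definition Gbeta (beta : R) (N p : nat) (mu : 'M[R]_(N, p)) (X : 'M[R]_(N, p)) : R :=
  - F0 beta (- Fmu beta mu X).

Definition partial (N p : nat) (k : 'I_N) (j : 'I_p) (f : 'M[R]_(N, p) -> R)
    (X : 'M[R]_(N, p)) : R :=
  derive1 (fun t : R => f (X + t *: delta_mx k j)) 0.

Definition C3 (g : R -> R) : Prop :=
  [/\ forall x, derivable g x 1,
      forall x, derivable (derive1 g) x 1,
      forall x, derivable (derive1 (derive1 g)) x 1
    & continuous (derive1 (derive1 (derive1 g)))].

Definition supnorm (h : R -> R) : \bar R :=
  ereal_sup [set (`|h t|)%:E | t in setT].

End Defs.

(* Main.v *)
Require Import Defs.
From HB Require Import structures.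
From mathcomp Require Import all_boot all_order all_algebra.
From mathcomp Require Import all_classical all_reals all_analysis.
From mathcomp Require Import ring lra.
Import Order.TTheory GRing.Theory Num.Theory.
Import numFieldNormedType.Exports.
Local Open Scope ring_scope.

Section W.
Variable R : realType.
Lemma isdD (f g : R -> R) (x df dg : R) : is_derive x 1 f df -> is_derive x 1 g dg ->
  is_derive x 1 (fun t => f t + g t) (df + dg).
Proof. move=> ? ?; exact: is_deriveD. Qed.
Lemma isdM (f g : R -> R) (x df dg : R) : is_derive x 1 f df -> is_derive x 1 g dg ->
  is_derive x 1 (fun t => f t * g t) (f x * dg + g x * df).
Proof. move=> ? ?; exact: is_deriveM. Qed.
Lemma isdid (x : R) : is_derive x 1 (fun t : R => t) 1.
Proof. exact: is_derive_id. Qed.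
Lemma isdcst (x : R) (c : R) : is_derive x 1 (fun t : R => c) 0.
Proof. exact: is_derive_cst. Qed.
Lemma isdcomp (h f : R -> R) (x dh df : R) : is_derive (f x) 1 h dh -> is_derive x 1 f df ->
  is_derive x 1 (fun t => h (f t)) (dh * df).
Proof. move=> ? ?; exact: is_derive1_comp. Qed.
Lemma isdV (f : R -> R) (x df : R) : f x != 0 -> is_derive x 1 f df ->
  is_derive x 1 (fun t => (f t)^-1) (- (f x) ^- 2 * df).
Proof. move=> ? ?; exact: is_deriveV. Qed.
Lemma isdsum (n : nat) (f : 'I_n -> R -> R) (x : R) (df : 'I_n -> R) :
  (forall i, is_derive x 1 (f i) (df i)) ->
  is_derive x 1 (fun t => \sum_i f i t) (\sum_i df i).
Proof.
move=> H. rewrite (_ : (fun t => \sum_i f i t) = \sum_i f i); last first.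
  by apply/funext => t; rewrite fct_sumE.
exact: is_derive_sum.
Qed.

Arguments isdD {f g x df dg}.
Arguments isdM {f g x df dg}.
Arguments isdcomp {h f x dh df}.
Arguments isdV {f x df}.

Variables (N p : nat) (beta : R) (mu : 'M[R]_(N, p)).
Local Notation M := 'M[R]_(N, p).
Local Notation I := ('I_N * 'I_p)%type.

Definition hasD (f : M -> R) (a : I) (df : M -> R) :=
  forall X : M, is_derive (0:R) 1 (fun t : R => f (X + t *: delta_mx a.1 a.2)) (df X).

Lemma line0 (X : M) (a : I) : X + (0:R) *: delta_mx a.1 a.2 = X.
Proof. by rewrite scale0r addr0. Qed.

Lemma partial_eq f k j df : hasD f (k, j) df -> partial k j f = df.
Proof.
move=> H; apply/funext => X; rewrite /partial derive1E.
exact: (@derive_val _ _ _ _ _ _ _ (H X)).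
Qed.

Lemma hasD_ext f a df df' : hasD f a df -> (forall X, df X = df' X) -> hasD f a df'.
Proof. by move=> H E X; rewrite -E. Qed.

Lemma hasD_cst c a : hasD (fun _ => c) a (fun _ => 0).
Proof. move=> X; exact: isdcst. Qed.

Lemma hasD_entry k j a : hasD (fun X => X k j) a (fun _ => ((k, j) == a)%:R).
Proof.
move=> X.
have -> : (fun t : R => (X + t *: delta_mx a.1 a.2) k j) =
          (fun t => X k j + t * ((k, j) == a)%:R).
  apply/funext => t; rewrite !mxE; case: a => l m /=.
  by rewrite xpair_eqE.
have H := isdD (isdcst 0 (X k j)) (isdM (isdid 0) (isdcst 0 ((k, j) == a)%:R)).
move: H; set c := (_ == _)%:R => H.
apply: (is_derive_eq H).

by rewrite add0r mulr0 add0r mulr1.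
Qed.

Lemma hasD_add f g a df dg : hasD f a df -> hasD g a dg ->
  hasD (fun X => f X + g X) a (fun X => df X + dg X).
Proof. move=> Hf Hg X; exact: isdD. Qed.

Lemma hasD_mul f g a df dg : hasD f a df -> hasD g a dg ->
  hasD (fun X => f X * g X) a (fun X => f X * dg X + g X * df X).
Proof.
move=> Hf Hg X; have := isdM (Hf X) (Hg X); by rewrite line0.
Qed.

Lemma hasD_sum n (f : 'I_n -> M -> R) a df : (forall i, hasD (f i) a (df i)) ->
  hasD (fun X => \sum_i f i X) a (fun X => \sum_i df i X).
Proof. move=> H X; apply: isdsum => i; exact: H. Qed.

Lemma hasD_comp (h h' : R -> R) f a df : (forall x : R, is_derive x 1 h (h' x)) ->
  hasD f a df -> hasD (fun X => h (f X)) a (fun X => h' (f X) * df X).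
Proof.
move=> Hh Hf X; apply: isdcomp; last exact: Hf.
by rewrite line0.
Qed.

Lemma hasD_inv f a df : (forall X, f X != 0) -> hasD f a df ->
  hasD (fun X => (f X)^-1) a (fun X => - (f X) ^- 2 * df X).
Proof.
move=> H0 Hf X; have := isdV (H0 _) (Hf X); by rewrite line0.
Qed.

Lemma hasD_ln f a df : (forall X, 0 < f X) -> hasD f a df ->
  hasD (fun X => ln (f X)) a (fun X => (f X)^-1 * df X).
Proof.
move=> H0 Hf X; apply: isdcomp; last exact: Hf.
rewrite line0; exact: is_derive1_ln.
Qed.

Lemma sum_delta (J : finType) (j0 : J) (F : J -> R) :
  \sum_j (j == j0)%:R * F j = F j0.
Proof.
rewrite (bigD1 j0) //= eqxx mul1r big1 ?addr0 // => j /negbTE ->.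
by rewrite mul0r.
Qed.

Definition ee k j (X : M) := expR (beta * (X k j + mu k j)).
Definition S k (X : M) := \sum_j ee k j X.
Definition u k (X : M) := (S k X)^-1.
Definition T (X : M) := \sum_k u k X.
Definition GG (X : M) := - (beta^-1 * ln (T X)).
Definition w (a : I) (X : M) := ee a.1 a.2 X * (u a.1 X * u a.1 X) * (T X)^-1.
Definition q (a : I) (X : M) := ee a.1 a.2 X * u a.1 X.
Definition dl (a b : I) : R := (a == b)%:R.
Definition rk (a b : I) : R := (a.1 == b.1)%:R.
Definition dw a b X := beta * w a X * (dl a b - 2 * rk a b * q (a.1, b.2) X + w b X).
Definition dq a b X := beta * q a X * (dl a b - rk a b * q (a.1, b.2) X).

Lemma D_ee k j b : hasD (ee k j) b (fun X => beta * dl (k, j) b * ee k j X).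
Proof.
apply: hasD_ext.
  apply: (@hasD_comp expR expR _ _ _ (fun x => is_derive_expR x)).
  apply: hasD_mul; first exact: hasD_cst.
  apply: hasD_add; [exact: hasD_entry | exact: hasD_cst].
by move=> X /=; rewrite /ee /dl; ring.
Qed.

Lemma D_S k b : hasD (S k) b (fun X => beta * ((k == b.1)%:R * ee k b.2 X)).
Proof.
apply: hasD_ext; first by apply: hasD_sum => j; exact: D_ee.
move=> X /=; under eq_bigr => j _ do rewrite -mulrA.
rewrite -mulr_sumr; congr (_ * _).
case: b => l m /=; rewrite /dl; under eq_bigr => j _ do rewrite xpair_eqE /=.
case: (k == l) => /=; last by rewrite mul0r big1 // => j _; rewrite mul0r.
by rewrite mul1r sum_delta.
Qed.

Variables (k0 : 'I_N) (j0 : 'I_p).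
Hypothesis hb : 0 < beta.

Lemma ee_gt0 k j X : 0 < ee k j X.
Proof. exact: expR_gt0. Qed.

Lemma S_gt0 k X : 0 < S k X.
Proof.
rewrite /S (bigD1 j0) //=; apply: ltr_pwDl; first exact: ee_gt0.
by apply: sumr_ge0 => j _; apply/ltW/ee_gt0.
Qed.

Lemma u_gt0 k X : 0 < u k X.
Proof. by rewrite /u invr_gt0 S_gt0. Qed.

Lemma T_gt0 X : 0 < T X.
Proof.
rewrite /T (bigD1 k0) //=; apply: ltr_pwDl; first exact: u_gt0.
by apply: sumr_ge0 => k _; apply/ltW/u_gt0.
Qed.

Lemma D_u k b : hasD (u k) b
  (fun X => - (beta * ((k == b.1)%:R * (u k X * u k X) * ee k b.2 X))).
Proof.
apply: hasD_ext.
  apply: hasD_inv; last exact: D_S.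
  by move=> X; rewrite gt_eqF ?S_gt0.
move=> X /=; rewrite -exprVn -/(u k X); ring.
Qed.

Lemma D_T b : hasD T b (fun X => - (beta * (u b.1 X * u b.1 X * ee b.1 b.2 X))).
Proof.
apply: hasD_ext; first by apply: hasD_sum => k; exact: D_u.
move=> X /=.
under eq_bigr => k _ do rewrite -mulrA (mulrC beta) -!mulrA.
by rewrite sumrN sum_delta; congr (- _); ring.
Qed.

Lemma D_Ti b : hasD (fun X => (T X)^-1) b (fun X => beta * w b X * (T X)^-1).
Proof.
apply: hasD_ext.
  apply: hasD_inv; last exact: D_T.
  by move=> X; rewrite gt_eqF ?T_gt0.
move=> X /=; rewrite /w -exprVn; ring.
Qed.

Lemma D_GG b : hasD GG b (w b).
Proof.
apply: hasD_ext.
  apply: (@hasD_comp (fun x => - (beta^-1 * x)) (fun _ => - beta^-1)).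
    move=> x; have H := is_deriveN (isdM (isdcst x beta^-1) (isdid x)).
    apply: (is_derive_eq H); by rewrite mulr0 addr0 mulr1.
  apply: hasD_ln; last exact: D_T.
  exact: T_gt0.
move=> X /=; rewrite /w.
have hb0 : beta != 0 by rewrite gt_eqF.
have hT : T X != 0 by rewrite gt_eqF ?T_gt0.
field.
by rewrite hT hb0.
Qed.

Lemma D_w a b : hasD (w a) b (dw a b).
Proof.
apply: hasD_ext.
  apply: hasD_mul; last exact: D_Ti.
  apply: hasD_mul; first exact: D_ee.
  apply: hasD_mul; exact: D_u.
move=> X /=; rewrite /dw; set wb := w b X; rewrite /w /q /rk /=; ring.
Qed.

Lemma D_q a b : hasD (q a) b (dq a b).
Proof.
apply: hasD_ext.
  apply: hasD_mul; [exact: D_ee | exact: D_u].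
move=> X /=; rewrite /dq /q /rk /=; ring.
Qed.

Lemma hasD_neg f a df : hasD f a df -> hasD (fun X => - f X) a (fun X => - df X).
Proof. move=> Hf X; exact: is_deriveN. Qed.

Definition ddw c b a X := beta * (dw c a X * (dl c b - 2 * rk c b * q (c.1, b.2) X + w b X)
   + w c X * (- (2 * rk c b * dq (c.1, b.2) a X) + dw b a X)).

Lemma D_dw c b a : hasD (dw c b) a (ddw c b a).
Proof.
apply: hasD_ext.
  apply: hasD_mul; first by apply: hasD_mul; [exact: hasD_cst | exact: D_w].
  apply: hasD_add; last exact: D_w.
  apply: hasD_add; first exact: hasD_cst.
  apply: hasD_neg; apply: hasD_mul; first exact: hasD_cst.
  exact: D_q.
move=> X /=; rewrite /ddw; ring.
Qed.

Variable g : R -> R.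
Hypothesis hg : C3 g.
Let g1 : R -> R := derive1 g.
Let g2 : R -> R := derive1 g1.
Let g3 : R -> R := derive1 g2.

Lemma der_g (x : R) : is_derive x 1 g (g1 x).
Proof. case: hg => H _ _ _; rewrite /g1 derive1E; exact: derivableP. Qed.
Lemma der_g1 (x : R) : is_derive x 1 g1 (g2 x).
Proof. case: hg => _ H _ _; rewrite /g2 derive1E; exact: derivableP. Qed.
Lemma der_g2 (x : R) : is_derive x 1 g2 (g3 x).
Proof. case: hg => _ _ H _; rewrite /g3 derive1E; exact: derivableP. Qed.

Definition D1 c X := g1 (GG X) * w c X.
Definition D2 c b X := g1 (GG X) * dw c b X + w c X * (g2 (GG X) * w b X).
Definition D3 c b a X :=
  (g1 (GG X) * ddw c b a X + dw c b X * (g2 (GG X) * w a X)) +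
  (w c X * (g2 (GG X) * dw b a X + w b X * (g3 (GG X) * w a X))
    + (g2 (GG X) * w b X) * dw c a X).

Lemma D_m c : hasD (fun X => g (GG X)) c (D1 c).
Proof. apply: hasD_comp; [exact: der_g | exact: D_GG]. Qed.

Lemma D_D1 c b : hasD (D1 c) b (D2 c b).
Proof.
apply: hasD_mul; last exact: D_w.
apply: hasD_comp; [exact: der_g1 | exact: D_GG].
Qed.

Lemma D_D2 c b a : hasD (D2 c b) a (D3 c b a).
Proof.
apply: hasD_add.
  apply: hasD_mul; last exact: D_dw.
  apply: hasD_comp; [exact: der_g1 | exact: D_GG].
apply: hasD_mul; first exact: D_w.
apply: hasD_mul; last exact: D_w.
apply: hasD_comp; [exact: der_g2 | exact: D_GG].
Qed.

Lemma sumI (F : I -> R) : \sum_a F a = \sum_k \sum_j F (k, j).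
Proof. by rewrite pair_big; apply: eq_bigr => -[]. Qed.

Lemma w_ge0 a X : 0 <= w a X.
Proof.
rewrite /w; apply: mulr_ge0; last by rewrite invr_ge0 ltW ?T_gt0.
by apply: mulr_ge0; [apply/ltW/ee_gt0 | apply: mulr_ge0; apply/ltW/u_gt0].
Qed.

Lemma q_ge0 a X : 0 <= q a X.
Proof. by rewrite /q; apply: mulr_ge0; [apply/ltW/ee_gt0 | apply/ltW/u_gt0]. Qed.

Lemma sum_q k X : \sum_j q (k, j) X = 1.
Proof.
rewrite /q /= -mulr_suml -/(S k X) /u mulfV //.
by rewrite gt_eqF ?S_gt0.
Qed.

Lemma sum_w X : \sum_a w a X = 1.
Proof.
rewrite sumI /w /=.
under eq_bigr => k _ do rewrite -mulr_suml -mulr_suml -/(S k X).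
rewrite -mulr_suml.
under eq_bigr => k _ do rewrite /u mulrA mulfV ?mul1r ?gt_eqF ?S_gt0 //.
by rewrite -/(T X) mulfV // gt_eqF ?T_gt0.
Qed.

Lemma sum_dl a : \sum_b dl a b = 1.
Proof.
rewrite /dl; under eq_bigr => b _ do rewrite eq_sym -[_%:R]mulr1.
by rewrite sum_delta.
Qed.

Lemma sum_rkq a X : \sum_b rk a b * q (a.1, b.2) X = 1.
Proof.
rewrite sumI /rk /=; under eq_bigr => k _ do rewrite -mulr_sumr sum_q mulr1 eq_sym -[_%:R]mulr1.
by rewrite sum_delta.
Qed.

Lemma dl_ge0 a b : 0 <= dl a b. Proof. by rewrite /dl ler0n. Qed.
Lemma rk_ge0 a b : 0 <= rk a b. Proof. by rewrite /rk ler0n. Qed.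

Lemma norm3 (x y z : R) : 0 <= x -> 0 <= y -> 0 <= z -> `|x - y + z| <= x + y + z.
Proof. move=> *; rewrite ler_norml; apply/andP; split; lra. Qed.
Lemma norm2 (x y : R) : 0 <= x -> 0 <= y -> `|x - y| <= x + y.
Proof. move=> *; rewrite ler_norml; apply/andP; split; lra. Qed.

Lemma bound_dw a X : \sum_b `|dw a b X| <= 4 * beta * w a X.
Proof.
apply: (@le_trans _ _ (\sum_b beta * w a X * (dl a b + 2 * rk a b * q (a.1, b.2) X + w b X))).
  apply: ler_sum => b _; rewrite /dw normrM ger0_norm; last first.
    by apply: mulr_ge0; [exact: ltW | exact: w_ge0].
  apply: ler_wpM2l; first by apply: mulr_ge0; [exact: ltW | exact: w_ge0].
  apply: norm3; [exact: dl_ge0 | | exact: w_ge0].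
  by apply: mulr_ge0; [apply: mulr_ge0; [by [] | exact: rk_ge0] | exact: q_ge0].
rewrite -mulr_sumr !big_split /= sum_dl sum_w.
under eq_bigr => b _ do rewrite -mulrA.
rewrite -mulr_sumr sum_rkq; lra.
Qed.

Lemma bound_dw_all X : \sum_a \sum_b `|dw a b X| <= 4 * beta.
Proof.
apply: (@le_trans _ _ (\sum_a 4 * beta * w a X)); first by apply: ler_sum => a _; exact: bound_dw.
by rewrite -mulr_sumr sum_w mulr1.
Qed.

Lemma bound_dq a X : \sum_b `|dq a b X| <= 2 * beta * q a X.
Proof.
apply: (@le_trans _ _ (\sum_b beta * q a X * (dl a b + rk a b * q (a.1, b.2) X))).
  apply: ler_sum => b _; rewrite /dq normrM ger0_norm; last first.
    by apply: mulr_ge0; [exact: ltW | exact: q_ge0].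
  apply: ler_wpM2l; first by apply: mulr_ge0; [exact: ltW | exact: q_ge0].
  apply: norm2; first exact: dl_ge0.
  by apply: mulr_ge0; [exact: rk_ge0 | exact: q_ge0].
rewrite -mulr_sumr !big_split /= sum_dl sum_rkq; lra.
Qed.

Lemma lin_sum (A B C : I -> R) (x K W Z : R) :
  \sum_a (x * (A a * K + W * (Z * B a + C a))) =
  x * (K * \sum_a A a + W * (Z * \sum_a B a + \sum_a C a)).
Proof.
rewrite -mulr_sumr; congr (_ * _); rewrite big_split /= -mulr_sumr big_split /=.
by rewrite -mulr_sumr -mulr_suml mulrC.
Qed.

Lemma lin_sum2 (A B C : I -> R) (x y z : R) :
  \sum_a (x * (y * A a + z * (x * B a + C a))) =
  x * (y * \sum_a A a + z * (x * \sum_a B a + \sum_a C a)).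
Proof.
rewrite -mulr_sumr; congr (_ * _); rewrite big_split /= -mulr_sumr -mulr_sumr big_split /=.
by rewrite -mulr_sumr.
Qed.

Definition Kb c b X := dl c b + 2 * rk c b * q (c.1, b.2) X + w b X.

Lemma Kb_ge0 c b X : 0 <= Kb c b X.
Proof.
rewrite /Kb; apply: addr_ge0; last exact: w_ge0.
apply: addr_ge0; first exact: dl_ge0.
by apply: mulr_ge0; [apply: mulr_ge0; [by [] | exact: rk_ge0] | exact: q_ge0].
Qed.

Lemma sum_Kb c X : \sum_b Kb c b X = 4.
Proof.
rewrite /Kb !big_split /= sum_dl sum_w.
under eq_bigr => b _ do rewrite -mulrA.
rewrite -mulr_sumr sum_rkq; lra.
Qed.

Lemma pt_ddw c b a X : `|ddw c b a X| <=
  beta * (`|dw c a X| * Kb c b X + w c X * ((2 * rk c b) * `|dq (c.1, b.2) a X| + `|dw b a X|)).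
Proof.
have hb0 := ltW hb.
rewrite /ddw normrM (ger0_norm hb0); apply: ler_wpM2l => //.
apply: le_trans (ler_normD _ _) _; apply: lerD.
  rewrite normrM; apply: ler_wpM2l; first exact: normr_ge0.
  rewrite /Kb; apply: norm3; [exact: dl_ge0 | | exact: w_ge0].
  by apply: mulr_ge0; [apply: mulr_ge0; [by [] | exact: rk_ge0] | exact: q_ge0].
rewrite normrM (ger0_norm (w_ge0 _ _)); apply: ler_wpM2l; first exact: w_ge0.
apply: le_trans (ler_normD _ _) _; apply: lerD => //.
rewrite normrN normrM ger0_norm //.
by apply: mulr_ge0; [by [] | exact: rk_ge0].
Qed.

Lemma bound_ddw c X : \sum_b \sum_a `|ddw c b a X| <= 24 * beta ^+ 2 * w c X.
Proof.
have hb0 := ltW hb.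
apply: (@le_trans _ _ (\sum_b beta * (Kb c b X * (4 * beta * w c X) + w c X *
    ((4 * beta) * (rk c b * q (c.1, b.2) X) + \sum_a `|dw b a X|)))).
  apply: ler_sum => b _.
  apply: le_trans; first by apply: ler_sum => a _; exact: pt_ddw.
  rewrite lin_sum; apply: ler_wpM2l => //; apply: lerD.
    apply: ler_wpM2l; [exact: Kb_ge0 | exact: bound_dw].
  apply: ler_wpM2l; first exact: w_ge0.
  apply: lerD => //.
  have h2 : 0 <= 2 * rk c b by apply: mulr_ge0; [by [] | exact: rk_ge0].
  apply: le_trans (ler_wpM2l h2 (bound_dq (c.1, b.2) X)) _.
  by rewrite le_eqVlt; apply/orP; left; apply/eqP; ring.
rewrite lin_sum sum_Kb sum_rkq.
have H := bound_dw_all X.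
have hw := w_ge0 c X.
set s := \sum_i _ in H *.
rewrite -(@ler_pM2l _ beta^-1) ?invr_gt0 // mulrA mulVf ?gt_eqF // mul1r.
have -> : beta^-1 * (24 * beta ^+ 2 * w c X) = 24 * beta * w c X.
  by field; rewrite gt_eqF.
have := ler_wpM2l hw H; lra.
Qed.

Lemma normw a X : `|w a X| = w a X.
Proof. by rewrite ger0_norm // w_ge0. Qed.

Lemma Gbeta_eq X : Gbeta beta mu X = GG X.
Proof.
rewrite /Gbeta /F0 /GG /T; congr (- (_ * ln _)); apply: eq_bigr => k _.
rewrite !mxE /Fk.
under eq_bigr => j _ do rewrite mxE.
rewrite -/(S k X) mulrN mulrA mulfV ?gt_eqF // mul1r expRN lnK ?posrE ?S_gt0 //.
Qed.

Opaque ee S u T GG w q dw dq ddw.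

Lemma sum3_split (F G : I -> I -> I -> R) :
  \sum_a \sum_b \sum_c (F a b c + G a b c) =
  \sum_a \sum_b \sum_c F a b c + \sum_a \sum_b \sum_c G a b c.
Proof.
rewrite -big_split; apply: eq_bigr => a _; rewrite -big_split; apply: eq_bigr => b _.
by rewrite big_split.
Qed.

Lemma sum3_mul x (F : I -> I -> I -> R) :
  \sum_a \sum_b \sum_c (x * F a b c) = x * \sum_a \sum_b \sum_c F a b c.
Proof.
rewrite mulr_sumr; apply: eq_bigr => a _; rewrite mulr_sumr; apply: eq_bigr => b _.
by rewrite mulr_sumr.
Qed.

Lemma sum2_mul x (F : I -> I -> R) :
  \sum_a \sum_b (x * F a b) = x * \sum_a \sum_b F a b.
Proof. rewrite mulr_sumr; apply: eq_bigr => a _; by rewrite mulr_sumr. Qed.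

Lemma bound_dw_all' X : \sum_b \sum_c `|dw c b X| <= 4 * beta.
Proof. rewrite exchange_big; exact: bound_dw_all. Qed.

Lemma bound_ddw_all X : \sum_a \sum_b \sum_c `|ddw c b a X| <= 24 * beta ^+ 2.
Proof.
have -> : \sum_a \sum_b \sum_c `|ddw c b a X| = \sum_c \sum_b \sum_a `|ddw c b a X|.
  under eq_bigr => a _ do rewrite exchange_big.
  rewrite exchange_big; apply: eq_bigr => c _; by rewrite exchange_big.
apply: le_trans; first by apply: ler_sum => c _; exact: bound_ddw.
by rewrite -mulr_sumr sum_w mulr1.
Qed.

Lemma bound1 X : \sum_c `|D1 c X| = `|g1 (GG X)|.
Proof.
rewrite /D1; under eq_bigr => c _ do rewrite normrM normw.
by rewrite -mulr_sumr sum_w mulr1.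
Qed.

Lemma bound2 X : \sum_b \sum_c `|D2 c b X| <= `|g2 (GG X)| + 4 * beta * `|g1 (GG X)|.
Proof.
set G1 := `|g1 (GG X)|; set G2 := `|g2 (GG X)|.
apply: (@le_trans _ _ (\sum_b \sum_c (G1 * `|dw c b X| + G2 * (w b X * w c X)))).
  apply: ler_sum => b _; apply: ler_sum => c _.
  rewrite /D2; apply: le_trans (ler_normD _ _) _; apply: lerD.
    by rewrite normrM.
  rewrite normrM normw normrM normw -/G2 le_eqVlt; apply/orP; left; apply/eqP; ring.
have -> : \sum_b \sum_c (G1 * `|dw c b X| + G2 * (w b X * w c X)) =
   G1 * (\sum_b \sum_c `|dw c b X|) + G2 * (\sum_b w b X * \sum_c w c X).
  rewrite -sum2_mul mulr_sumr -big_split; apply: eq_bigr => b _.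
  by rewrite mulr_sumr mulr_sumr -big_split.
rewrite -mulr_suml sum_w mul1r.
rewrite mulr1 addrC; apply: lerD => //.
rewrite mulrC; apply: ler_wpM2r; [exact: normr_ge0 | exact: bound_dw_all'].
Qed.

Lemma norm5 (x1 x2 x3 x4 x5 : R) :
  `|(x1 + x2) + ((x3 + x4) + x5)| <= `|x1| + `|x2| + `|x3| + `|x4| + `|x5|.
Proof.
have h := ler_normD (x1 + x2) ((x3 + x4) + x5).
have h12 := ler_normD x1 x2; have h34 := ler_normD x3 x4.
have h345 := ler_normD (x3 + x4) x5.
lra.
Qed.

Lemma P5 (A B C D wa wb wc h1 h2 h3 : R) : 0 <= wa -> 0 <= wb -> 0 <= wc ->
  `|(h1 * A + B * (h2 * wa)) + (wc * (h2 * C + wb * (h3 * wa)) + (h2 * wb) * D)| <=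
  `|h1| * `|A| + `|h2| * (`|B| * wa) + `|h2| * (wc * `|C|) + `|h3| * (wc * wb * wa)
  + `|h2| * (wb * `|D|).
Proof.
move=> ha hb' hc; rewrite mulrDr; apply: le_trans (norm5 _ _ _ _ _) _.
rewrite !normrM !(ger0_norm ha) !(ger0_norm hb') !(ger0_norm hc).
by rewrite le_eqVlt; apply/orP; left; apply/eqP; ring.
Qed.

Lemma sum5 (x1 x2 x3 x4 x5 : R) (F1 F2 F3 F4 F5 : I -> I -> I -> R) :
  \sum_a \sum_b \sum_c (x1 * F1 a b c + x2 * F2 a b c + x3 * F3 a b c + x4 * F4 a b c
     + x5 * F5 a b c) =
  x1 * (\sum_a \sum_b \sum_c F1 a b c) + x2 * (\sum_a \sum_b \sum_c F2 a b c)
  + x3 * (\sum_a \sum_b \sum_c F3 a b c) + x4 * (\sum_a \sum_b \sum_c F4 a b c)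
  + x5 * (\sum_a \sum_b \sum_c F5 a b c).
Proof. by rewrite !sum3_split !sum3_mul. Qed.

Lemma fin3 (G1 G2 G3 S1 S2 S3 S4 S5 : R) :
  G1 * S1 <= G1 * (24 * beta ^+ 2) -> G2 * S2 <= G2 * (4 * beta) ->
  G2 * S3 <= G2 * (4 * beta) -> G2 * S5 <= G2 * (4 * beta) -> G3 * S4 = G3 ->
  G1 * S1 + G2 * S2 + G2 * S3 + G3 * S4 + G2 * S5 <=
  G3 + 12 * beta * G2 + 24 * beta ^+ 2 * G1.
Proof. move=> *; lra. Qed.

Lemma bound3 X : \sum_a \sum_b \sum_c `|D3 c b a X| <=
   `|g3 (GG X)| + 12 * beta * `|g2 (GG X)| + 24 * beta ^+ 2 * `|g1 (GG X)|.
Proof.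
apply: (@le_trans _ _ (\sum_a \sum_b \sum_c (`|g1 (GG X)| * `|ddw c b a X| + `|g2 (GG X)| * (`|dw c b X| * w a X)
   + `|g2 (GG X)| * (w c X * `|dw b a X|) + `|g3 (GG X)| * (w c X * w b X * w a X) + `|g2 (GG X)| * (w b X * `|dw c a X|)))).
  apply: ler_sum => a _; apply: ler_sum => b _; apply: ler_sum => c _.
  exact: (@P5 (ddw c b a X) (dw c b X) (dw b a X) (dw c a X) (w a X) (w b X) (w c X)
    (g1 (GG X)) (g2 (GG X)) (g3 (GG X)) (w_ge0 a X) (w_ge0 b X) (w_ge0 c X)).
rewrite sum5.
have S1 := bound_ddw_all X.
have S2 : \sum_a \sum_b \sum_c (`|dw c b X| * w a X) <= 4 * beta.
  under eq_bigr => a _ do under eq_bigr => b _ do rewrite -mulr_suml.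
  under eq_bigr => a _ do rewrite -mulr_suml.
  rewrite -mulr_sumr sum_w mulr1; exact: bound_dw_all'.
have S3 : \sum_a \sum_b \sum_c (w c X * `|dw b a X|) <= 4 * beta.
  under eq_bigr => a _ do under eq_bigr => b _ do rewrite -mulr_suml sum_w mul1r.
  exact: bound_dw_all'.
have S4 : \sum_a \sum_b \sum_c (w c X * w b X * w a X) = 1.
  under eq_bigr => a _ do under eq_bigr => b _ do rewrite -mulr_suml -mulr_suml sum_w mul1r.
  under eq_bigr => a _ do rewrite -mulr_suml sum_w mul1r.
  exact: sum_w.
have S5 : \sum_a \sum_b \sum_c (w b X * `|dw c a X|) <= 4 * beta.
  under eq_bigr => a _ do under eq_bigr => b _ do rewrite -mulr_sumr.
  under eq_bigr => a _ do rewrite -mulr_suml sum_w mul1r.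
  exact: bound_dw_all'.
have h4 : `|g3 (GG X)| * (\sum_a \sum_b \sum_c (w c X * w b X * w a X)) = `|g3 (GG X)|.
  by rewrite S4 mulr1.
have g1p : 0 <= `|g1 (GG X)| by exact: normr_ge0.
have g2p : 0 <= `|g2 (GG X)| by exact: normr_ge0.
have h1 := ler_wpM2l g1p S1; have h2 := ler_wpM2l g2p S2.
have h3 := ler_wpM2l g2p S3; have h5 := ler_wpM2l g2p S5.
move: h1 h2 h3 h5 h4; exact: fin3.
Qed.

Lemma supnorm_ub (h : R -> R) x : ((`|h x|)%:E <= supnorm h)%E.
Proof. by apply: ereal_sup_ubound; exists x. Qed.

Lemma supnorm_ge0 (h : R -> R) : (0 <= supnorm h)%E.
Proof. apply: le_trans (supnorm_ub h 0); by rewrite lee_fin. Qed.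

Lemma reidx2 (F : I -> I -> R) :
  \sum_k1 \sum_k2 \sum_j1 \sum_j2 F (k1, j1) (k2, j2) = \sum_a \sum_b F a b.
Proof.
rewrite sumI; apply: eq_bigr => k1 _.
rewrite exchange_big; apply: eq_bigr => j1 _.
by rewrite sumI.
Qed.

Lemma reidx3 (F : I -> I -> I -> R) :
  \sum_k1 \sum_k2 \sum_k3 \sum_j1 \sum_j2 \sum_j3 F (k1, j1) (k2, j2) (k3, j3) =
  \sum_a \sum_b \sum_c F a b c.
Proof.
rewrite sumI; apply: eq_bigr => k1 _.
have -> : \sum_k2 \sum_k3 \sum_j1 \sum_j2 \sum_j3 F (k1, j1) (k2, j2) (k3, j3) =
          \sum_j1 \sum_k2 \sum_k3 \sum_j2 \sum_j3 F (k1, j1) (k2, j2) (k3, j3).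
  under eq_bigr => k2 _ do rewrite exchange_big.
  by rewrite exchange_big.
apply: eq_bigr => j1 _; rewrite sumI; apply: eq_bigr => k2 _.
rewrite exchange_big; apply: eq_bigr => j2 _.
by rewrite sumI.
Qed.

Lemma main_bounds X :
  let m := fun X : 'M[R]_(N, p) => g (Gbeta beta mu X) in
  [/\ ((\sum_(k < N) \sum_(j < p) `|partial k j m X|)%:E <= supnorm g1)%E,
      ((\sum_(k1 < N) \sum_(k2 < N) \sum_(j1 < p) \sum_(j2 < p)
          `|partial k1 j1 (partial k2 j2 m) X|)%:E
        <= supnorm g2 + (4 * beta)%:E * supnorm g1)%E
    & ((\sum_(k1 < N) \sum_(k2 < N) \sum_(k3 < N)
        \sum_(j1 < p) \sum_(j2 < p) \sum_(j3 < p)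
          `|partial k1 j1 (partial k2 j2 (partial k3 j3 m)) X|)%:E
        <= supnorm g3 + (16 * beta)%:E * supnorm g2
           + (24 * beta ^+ 2)%:E * supnorm g1)%E].
Proof.
move=> m.
have hm : m = (fun X => g (GG X)) by apply/funext => Y; rewrite /m Gbeta_eq.
rewrite hm; clear hm m.
have P1 k j : partial k j (fun X => g (GG X)) = D1 (k, j) := @partial_eq _ _ _ _ (D_m (k, j)).
have P2 k1 j1 k2 j2 : partial k1 j1 (partial k2 j2 (fun X => g (GG X))) = D2 (k2, j2) (k1, j1).
  by rewrite P1; apply: partial_eq; exact: D_D1.
have P3 k1 j1 k2 j2 k3 j3 : partial k1 j1 (partial k2 j2 (partial k3 j3 (fun X => g (GG X))))
    = D3 (k3, j3) (k2, j2) (k1, j1).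
  by rewrite P2; apply: partial_eq; exact: D_D2.
have E1 : \sum_(k < N) \sum_(j < p) `|partial k j (fun X => g (GG X)) X| = \sum_c `|D1 c X|.
  by rewrite sumI; apply: eq_bigr => k _; apply: eq_bigr => j _; rewrite P1.
have E2 : \sum_(k1 < N) \sum_(k2 < N) \sum_(j1 < p) \sum_(j2 < p)
          `|partial k1 j1 (partial k2 j2 (fun X => g (GG X))) X| = \sum_b \sum_c `|D2 c b X|.
  rewrite -(reidx2 (fun b c => `|D2 c b X|)).
  apply: eq_bigr => k1 _; apply: eq_bigr => k2 _; apply: eq_bigr => j1 _; apply: eq_bigr => j2 _.
  by rewrite P2.
have E3 : \sum_(k1 < N) \sum_(k2 < N) \sum_(k3 < N) \sum_(j1 < p) \sum_(j2 < p) \sum_(j3 < p)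
          `|partial k1 j1 (partial k2 j2 (partial k3 j3 (fun X => g (GG X)))) X|
          = \sum_a \sum_b \sum_c `|D3 c b a X|.
  rewrite -(reidx3 (fun a b c => `|D3 c b a X|)).
  apply: eq_bigr => k1 _; apply: eq_bigr => k2 _; apply: eq_bigr => k3 _.
  apply: eq_bigr => j1 _; apply: eq_bigr => j2 _; apply: eq_bigr => j3 _.
  by rewrite P3.
rewrite E1 E2 E3 bound1; split.
- exact: supnorm_ub.
- apply: (@le_trans _ _ ((`|g2 (GG X)| + 4 * beta * `|g1 (GG X)|)%:E)).
    by rewrite lee_fin; exact: bound2.
  rewrite EFinD EFinM; apply: leeD; first exact: supnorm_ub.
  apply: lee_wpmul2l; last exact: supnorm_ub.
  by rewrite lee_fin; apply: mulr_ge0 => //; exact: ltW.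
- apply: (@le_trans _ _ ((`|g3 (GG X)| + 12 * beta * `|g2 (GG X)| + 24 * beta ^+ 2 * `|g1 (GG X)|)%:E)).
    by rewrite lee_fin; exact: bound3.
  have h12 : 12 * beta * `|g2 (GG X)| <= 16 * beta * `|g2 (GG X)|.
    by apply: ler_wpM2r; [exact: normr_ge0 | apply: ler_wpM2r; [exact: ltW | rewrite ler_nat]].
  apply: (@le_trans _ _ ((`|g3 (GG X)| + 16 * beta * `|g2 (GG X)| + 24 * beta ^+ 2 * `|g1 (GG X)|)%:E)).
    by rewrite lee_fin; apply: lerD; [apply: lerD; [exact: lexx | exact: h12] | exact: lexx].
  rewrite !EFinD !EFinM; apply: leeD; first apply: leeD; first exact: supnorm_ub.
  + apply: lee_wpmul2l; last exact: supnorm_ub.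
    by rewrite lee_fin; apply: mulr_ge0 => //; exact: ltW.
  + apply: lee_wpmul2l; last exact: supnorm_ub.
    by rewrite lee_fin; apply: mulr_ge0 => //; apply: mulr_ge0; exact: ltW.
Qed.

End W.

Lemma empty_sum (R : realType) (n : nat) (F : 'I_n -> R) : n = 0%N -> \sum_(i < n) F i = 0.
Proof. by move=> n0; subst n; rewrite big_ord0. Qed.

Theorem lemmaF3 (R : realType) (N p : nat) (beta : R) (mu : 'M[R]_(N, p))
    (g : R -> R) :
  0 < beta -> C3 g ->
  let m := fun X : 'M[R]_(N, p) => g (Gbeta beta mu X) in
  let g1 := derive1 g in
  let g2 := derive1 g1 in
  let g3 := derive1 g2 in
  forall X : 'M[R]_(N, p),
  [/\ ((\sum_(k < N) \sum_(j < p) `|partial k j m X|)%:E <= supnorm g1)%E,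
      ((\sum_(k1 < N) \sum_(k2 < N) \sum_(j1 < p) \sum_(j2 < p)
          `|partial k1 j1 (partial k2 j2 m) X|)%:E
        <= supnorm g2 + (4 * beta)%:E * supnorm g1)%E
    & ((\sum_(k1 < N) \sum_(k2 < N) \sum_(k3 < N)
        \sum_(j1 < p) \sum_(j2 < p) \sum_(j3 < p)
          `|partial k1 j1 (partial k2 j2 (partial k3 j3 m)) X|)%:E
        <= supnorm g3 + (16 * beta)%:E * supnorm g2
           + (24 * beta ^+ 2)%:E * supnorm g1)%E].
Proof.
move=> hb hg m g1 g2 g3 X.
have hb0 := ltW hb.
have Z : [/\ (0 <= supnorm g1)%E, (0 <= supnorm g2 + (4 * beta)%:E * supnorm g1)%E
   & (0 <= supnorm g3 + (16 * beta)%:E * supnorm g2 + (24 * beta ^+ 2)%:E * supnorm g1)%E].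
  have s1 := @supnorm_ge0 R g1; have s2 := @supnorm_ge0 R g2; have s3 := @supnorm_ge0 R g3.
  have h4 : (0 <= (4 * beta)%:E)%E by rewrite lee_fin mulr_ge0.
  have h16 : (0 <= (16 * beta)%:E)%E by rewrite lee_fin mulr_ge0.
  have h24 : (0 <= (24 * beta ^+ 2)%:E)%E by rewrite lee_fin mulr_ge0 // mulr_ge0.
  split; first exact: s1.
    exact: (adde_ge0 s2 (mule_ge0 h4 s1)).
  exact: (adde_ge0 (adde_ge0 s3 (mule_ge0 h16 s2)) (mule_ge0 h24 s1)).
case: Z => Z1 Z2 Z3.
have [N0|NP] := eqVneq N 0%N.
  by rewrite !(@empty_sum _ N _ N0).
have [p0|pP] := eqVneq p 0%N.
  split.
  - rewrite big1; first exact: Z1.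
    by move=> k _; exact: empty_sum.
  - rewrite big1; first exact: Z2.
    by move=> k1 _; rewrite big1 // => k2 _; exact: empty_sum.
  - rewrite big1; first exact: Z3.
    by move=> k1 _; rewrite big1 // => k2 _; rewrite big1 // => k3 _; exact: empty_sum.
have k0 : 'I_N by exists 0%N; rewrite lt0n.
have j0 : 'I_p by exists 0%N; rewrite lt0n.
exact (@main_bounds R N p beta mu k0 j0 hb g hg X).
Qed.
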